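(* Let $N=2^L$ ($L\ge1$), channel numbers $r_0,\dots,r_{L-1}\ge1$, an output index $y$, and pairwise distinct covering templates $\mathbf x^{(1)},\dots,\mathbf x^{(M)}\in\mathbb R^s$ be given. Suppose all parameters of the deep ConvNet with ReLU activation and max pooling (the representation parameters $\theta_1,\dots,\theta_M\in\Theta$ and all linear weights $\mathbf a^{l,j,\gamma}$) are drawn from a distribution having a continuous probability density function that vanishes nowhere. Then with positive probability the resulting score function $h^D_y$ can be realized by a shallow ConvNet with ReLU activation and max pooling having a single hidden channel ($Z=1$), i.e. there exist $f_{\tilde\theta_1},\dots,f_{\tilde\theta_M}\in\mathcal F$ and weights for this shallow ConvNet with $\mathcal A(h^S_y)=\mathcal A(h^D_y)$.
   Context: Inputs are $X=(\mathbf x_1,\dots,\mathbf x_N)\in(\mathbb R^s)^N$. Representation functions are taken from a parametric family $\mathcal F=\{f_\theta:\mathbb R^s\to\mathbb R:\theta\in\Theta\}$, $\Theta$ an open subset of a Euclidean space, assumed throughout to satisfy: (continuity) $f_\theta(\mathbf x)$ is continuous in $\theta$ and $\mathbf x$; (non-degeneracy) for any pairwise distinct $\mathbf x^{(1)},\dots,\mathbf x^{(M)}$ there exist $f_{\theta_1},\dots,f_{\theta_M}\in\mathcal F$ with $F=(f_{\theta_d}(\mathbf x^{(i)}))_{i,d}$ non-singular. ReLU activation with max pooling: $\sigma(z)=\max\{0,z\}$, $P=\max$. Shallow ConvNet with $Z$ hidden channels: $h^S_y(X)=\sum_{z=1}^Z a^y_z\,P_{i\in[N]}\big(\sigma(\sum_{d=1}^M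 a^{z,i}_d f_{\theta_d}(\mathbf x_i))\big)$ with $f_{\theta_d}\in\mathcal F$, $\mathbf a^{z,i}\in\mathbb R^M$, $\mathbf a^y\in\mathbb R^Z$. Deep ConvNet: with $f_{\theta_d}\in\mathcal F$, $\mathbf a^{0,j,\gamma}\in\mathbb R^M$ ($j\in[N],\gamma\in[r_0]$), $\mathbf a^{l,j,\gamma}\in\mathbb R^{r_{l-1}}$ ($l\in[L-1]$, $j\in[N/2^l]$, $\gamma\in[r_l]$), $\mathbf a^{L,1,y}\in\mathbb R^{r_{L-1}}$: $u^0_{j,\gamma}=\sigma(\sum_d a^{0,j,\gamma}_d f_{\theta_d}(\mathbf x_j))$; for $l=0,\dots,L-1$, $v^l_{j,\gamma}=P(u^l_{2j-1,\gamma},u^l_{2j,\gamma})$ ($j\in[N/2^{l+1}]$), for $l\ge1$, $u^l_{j,\gamma}=\sigma(\sum_\alpha a^{l,j,\gamma}_\alpha v^{l-1}_{j,\alpha})$ ($j\in[N/2^l]$); $h^D_y(X)=\sum_\alpha a^{L,1,y}_\alpha v^{L-1}_{1,\alpha}$. Grid tensor w.r.t. templates $\mathbf x^{(1)},\dots,\mathbf x^{(M)}$: $\mathcal A(h)_{d_1,\dots,d_N}=h(\mathbf x^{(d_1)},\dots,\mathbf x^{(d_N)})$. Templates are covering if score functions are identified whenever their grid tensors coincide (so equal grid tensors means one network realizes the other's score function). *)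

(* Defs.v *)
From HB Require Import structures.
From mathcomp Require Import all_boot all_order all_algebra.
From mathcomp Require Import all_classical all_reals all_analysis.
Set Implicit Arguments. Unset Strict Implicit. Unset Printing Implicit Defensive.
Import Order.TTheory GRing.Theory Num.Theory.
Import numFieldNormedType.Exports.
Local Open Scope classical_set_scope.
Local Open Scope ring_scope.

Section ConvNets.
Variables (R : realType) (s p : nat).

Definition relu (z : R) : R := Num.max 0 z.

(** Parameters of the deep ConvNet are addressed by "codes" (tag, i1, i2, i3):
   - (0, d, k, 0)          : k-th coordinate of theta_d  (d < M, k < p)
   - (l.+1, j, g, a)       : a^{l,j,g}_a, weight of layer l (0 <= l <= L),
                             position j, channel g, input coordinate a
     (all indices 0-based; for the output layer l = L, j = 0 and g = y). *)
Definition code := (nat * nat * nat * nat)%type.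

Definition live_codes (M L Y : nat) (r : nat -> nat) : seq code :=
  flatten [seq [seq (0%N, d, k, 0%N) | k <- iota 0 p] | d <- iota 0 M]
  ++ flatten [seq flatten [seq [seq (1%N, j, g, d) | d <- iota 0 M]
                          | g <- iota 0 (r 0%N)] | j <- iota 0 (2 ^ L)]
  ++ flatten [seq flatten [seq flatten [seq [seq (l.+1, j, g, a) | a <- iota 0 (r l.-1)]
                                       | g <- iota 0 (r l)]
                          | j <- iota 0 (2 ^ (L - l))]
             | l <- iota 1 L.-1]
  ++ flatten [seq [seq (L.+1, 0%N, yy, a) | a <- iota 0 (r L.-1)] | yy <- iota 0 Y].

Definition nparams M L Y r := size (live_codes M L Y r).

Definition param (cs : seq code) (v : 'rV[R]_(size cs)) (c : code) : R :=
  \sum_(i < size cs) (nth (0%N, 0%N, 0%N, 0%N) cs i == c)%:R * v ord0 i.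

Definition theta_of (P : code -> R) (d : nat) : 'rV[R]_p :=
  \row_(k < p) P (0%N, d, val k, 0%N).

(** Deep ConvNet (ReLU activation, size-2 max pooling), all indices 0-based.
   uD l j g = u^l_{j,g};  v^l_{j,g} = max (u^l_{2j,g}) (u^l_{2j+1,g}). *)
Fixpoint deep_u (f : 'rV[R]_p -> 'rV[R]_s -> R) (M : nat) (r : nat -> nat)
    (P : code -> R) (X : seq 'rV[R]_s) (l j g : nat) : R :=
  match l with
  | 0 => relu (\sum_(d < M) P (1%N, j, g, val d) * f (theta_of P d) (nth 0 X j))
  | l'.+1 => relu (\sum_(a < r l') P (l'.+2, j, g, val a) *
                     Num.max (deep_u f M r P X l' j.*2 a) (deep_u f M r P X l' j.*2.+1 a))
  end.

Definition deep_h (f : 'rV[R]_p -> 'rV[R]_s -> R) (M L : nat) (r : nat -> nat)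
    (P : code -> R) (y : nat) (X : seq 'rV[R]_s) : R :=
  \sum_(a < r L.-1) P (L.+1, 0%N, y, val a) *
     Num.max (deep_u f M r P X L.-1 0 a) (deep_u f M r P X L.-1 1 a).

(** Shallow ConvNet with a single hidden channel (Z = 1), ReLU, max pooling
   over all N positions (ReLU outputs are >= 0, so 0 is a neutral element). *)
Definition shallow1_h (f : 'rV[R]_p -> 'rV[R]_s -> R) (M N : nat)
    (th : 'I_M -> 'rV[R]_p) (b : 'I_N -> 'I_M -> R) (c : R) (X : seq 'rV[R]_s) : R :=
  c * \big[Num.max/0]_(i < N) relu (\sum_(d < M) b i d * f (th d) (nth 0 X i)).

Definition grid_input (M N : nat) (xs : 'I_M -> 'rV[R]_s) (ds : N.-tuple 'I_M)
  : seq 'rV[R]_s := [seq xs d | d <- ds].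

Definition param_domain (Theta : set 'rV[R]_p) M L Y r
    (v : 'rV[R]_(nparams M L Y r)) : Prop :=
  forall d : 'I_M, Theta (theta_of (param v) d).

(** The event: the deep score function h^D_y is realized (same grid tensor)
   by a shallow ConvNet with Z = 1. *)
Definition realizable_event (Theta : set 'rV[R]_p) (f : 'rV[R]_p -> 'rV[R]_s -> R)
    M L Y r (y : nat) (xs : 'I_M -> 'rV[R]_s) : set 'rV[R]_(nparams M L Y r) :=
  fun v => exists th : 'I_M -> 'rV[R]_p, (forall d, Theta (th d)) /\
    exists (b : 'I_(2 ^ L) -> 'I_M -> R) (c : R),
      forall ds : (2 ^ L).-tuple 'I_M,
        shallow1_h f th b c (grid_input xs ds) =
        deep_h f M L r (param v) y (grid_input xs ds).

(** Lebesgue integral over R^n, as the iterated integral of a nonnegative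
   (extended-real valued) function of the coordinates 0..n-1. *)
Fixpoint leb_itint (n : nat) (g : (nat -> R) -> \bar R) : \bar R :=
  match n with
  | 0 => g (fun _ => 0)
  | n'.+1 => (\int[@lebesgue_measure R]_x
                leb_itint n' (fun w => g (fun i => if i == n' then x else w i)))%E
  end.

Definition rowof (n : nat) (w : nat -> R) : 'rV[R]_n := \row_(i < n) w i.

Definition prob_dens (n : nat) (rho : 'rV[R]_n -> R) (A : set 'rV[R]_n) : \bar R :=
  leb_itint n (fun w => ((rho (rowof n w)) * (\1_A (rowof n w)))%:E).

End ConvNets.

(* Main.v *)
Require Import Defs.
From HB Require Import structures.
From mathcomp Require Import all_boot all_order all_algebra.
From mathcomp Require Import all_classical all_reals all_analysis.
From mathcomp Require Import lra zify.
Import Order.TTheory GRing.Theory Num.Theory.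
Import numFieldNormedType.Exports.
Local Open Scope classical_set_scope.
Local Open Scope ring_scope.

Section S.
Variable R : realType.


Lemma int_lb (F : R -> \bar R) (c a b : R) : 0 <= c -> a <= b ->
  (forall x, (0 <= F x)%E) -> (forall x, a < x < b -> (c%:E <= F x)%E) ->
  ((c * (b - a))%:E <= \int[@lebesgue_measure R]_x F x)%E.
Proof.
move=> c0 ab F0 Fab.
have mI : measurable (`]a, b[%classic : set (measurableTypeR R)) by exact: measurable_itv.
rewrite ge0_integralTE //.
apply: le_trans (ereal_sup_ubound _); last first.
  exists (scale_nnsfun (indic_nnsfun R mI) c0) => //= x.

  rewrite /= /measurable_realfun.mindic indicE; case: (boolP (x \in _)) => [|_]; last by rewrite mulr0.
  by rewrite mulr1 => /set_mem; rewrite /= in_itv /=; exact: Fab.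
rewrite -(integralT_nnsfun _ (scale_nnsfun (indic_nnsfun R mI) c0)) /=.
rewrite /measurable_realfun.mindic.
have := @integralZl_indic _ _ R (@lebesgue_measure R) setT measurableT (fun _ => `]a, b[%classic) c (fun h : c < 0 => ltac:(by rewrite ltNge c0 in h)) mI.
move=> /= ->.
rewrite integral_indic // setIT. rewrite -[X in (_ * X)%E]/(lebesgue_measure (`]a, b[%classic : set R)) lebesgue_measure_itv /= lte_fin.
case: ltP => ab'; first by rewrite -EFinD EFinM.
have -> : b = a by apply/eqP; rewrite eq_le ab' ab.
by rewrite subrr mulr0 mule0.
Qed.

Lemma itint_ge0 n (g : (nat -> R) -> \bar R) :
  (forall w, (0 <= g w)%E) -> (0 <= leb_itint n g)%E.
Proof.
elim: n g => [|n IH] g g0 /=; first exact: g0.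
by apply: integral_ge0 => x _; apply: IH => w; exact: g0.
Qed.

Lemma itint_lb n : forall (g : (nat -> R) -> \bar R) (w0 : nat -> R) (del eps : R),
  0 < del -> 0 <= eps -> (forall w, (0 <= g w)%E) ->
  (forall w, (forall i, (i < n)%N -> `|w i - w0 i| < del) -> (eps%:E <= g w)%E) ->
  ((eps * del ^+ n)%:E <= leb_itint n g)%E.
Proof.
elim: n => [|n IH] g w0 del eps d0 e0 g0 gb /=.
  by rewrite expr0 mulr1; apply: gb.
have := @int_lb (fun x => leb_itint n (fun w => g (fun i => if i == n then x else w i)))
  (eps * del ^+ n) (w0 n) (w0 n + del).
rewrite addrAC subrr add0r -mulrA -exprSr; apply.
- by rewrite mulr_ge0 // exprn_ge0 // ltW.
- by rewrite lerDl ltW.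
- by move=> x; apply: itint_ge0 => w; exact: g0.
move=> x /andP[x1 x2]; apply: (IH _ w0) => // w wb; apply: gb => i; rewrite ltnS leq_eqVlt.
case: (eqVneq i n) => [-> _|_ /= /wb //].
rewrite ger0_norm; last by rewrite subr_ge0 ltW.
by rewrite ltrBlDl.
Qed.


Lemma coord_cvg n (i : 'I_n) (v0 : 'rV[R]_n) :
  (fun v : 'rV[R]_n => v ord0 i) @ v0 --> v0 ord0 i.
Proof.
move=> A /nbhs_ballP [e e0 eA]; apply/nbhs_ballP; exists e => // v [_ H].
exact: eA (H ord0 i).
Qed.

Lemma lin_cvg n (K : 'I_n -> R) (v0 : 'rV[R]_n) :
  (fun v : 'rV[R]_n => \sum_(i < n) K i * v ord0 i) @ v0 -->
  \sum_(i < n) K i * v0 ord0 i.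
Proof.
apply: (@cvg_big R 'I_n +%R 0 xpredT add_continuous _ (nbhs v0) _
  (fun i v => K i * v ord0 i) (fun i => K i * v0 ord0 i)) => i _.
apply: cvgM; [exact: cvg_cst | exact: coord_cvg].
Qed.

Lemma row_cvg (T : Type) (F : set_system T) {FF : Filter F} p
  (G : T -> 'rV[R]_p) (G0 : 'rV[R]_p) :
  (forall k, (fun t => G t ord0 k) @ F --> G0 ord0 k) -> G @ F --> G0.
Proof.
move=> H A /nbhs_ballP [e e0 eA].
have : \forall t \near F, forall k, ball (G0 ord0 k) e (G t ord0 k).
  apply: filter_forall => k; apply: (H k); exact: nbhsx_ballx.
apply: filterS => t Ht; apply: eA; split => // i j; by rewrite (ord1 i).
Qed.


Lemma sum_count (cs : seq Defs.code) (c : Defs.code) :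
  \sum_(i < size cs) (nth (0%N, 0%N, 0%N, 0%N) cs i == c)%:R = (count_mem c cs)%:R :> R.
Proof.
rewrite -(big_mkord xpredT (fun i => (nth (0%N, 0%N, 0%N, 0%N) cs i == c)%:R)).
rewrite -(big_nth _ xpredT (fun x => (x == c)%:R)).
elim: cs => [|x cs IH]; first by rewrite big_nil.
by rewrite big_cons IH /= natrD.
Qed.

Lemma param_v0 (cs : seq Defs.code) (des : Defs.code -> R) (c : Defs.code) : c \in cs ->
  param (\row_(i < size cs) (des (nth (0%N, 0%N, 0%N, 0%N) cs i) /
            (count_mem (nth (0%N, 0%N, 0%N, 0%N) cs i) cs)%:R)) c = des c.
Proof.
move=> cin; rewrite /param (eq_bigr (fun i : 'I_(size cs) =>
   (nth (0%N, 0%N, 0%N, 0%N) cs i == c)%:R * (des c / (count_mem c cs)%:R))); last first.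
  by move=> i _; rewrite mxE; case: eqP => [->|_]; rewrite ?mul0r ?mul1r.
rewrite -big_distrl /= sum_count.
have cnt : (count_mem c cs)%:R != 0 :> R.
  by rewrite pnatr_eq0 -lt0n -has_count has_pred1.
by rewrite mulrCA mulfV // mulr1.
Qed.

Lemma mem0 p M L Y r d k : (d < M)%N -> (k < p)%N ->
  (0%N, d, k, 0%N) \in live_codes p M L Y r.
Proof.
move=> hd hk; rewrite /live_codes mem_cat; apply/orP; left.
apply/flattenP; exists [seq (0%N, d, k, 0%N) | k <- iota 0 p].
  by apply: (map_f (fun d => [seq (0%N, d, k, 0%N) | k <- iota 0 p])); rewrite mem_iota.
by apply: map_f; rewrite mem_iota.
Qed.

Lemma mem1 p M L Y r j g d : (j < 2 ^ L)%N -> (g < r 0%N)%N -> (d < M)%N ->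
  (1%N, j, g, d) \in live_codes p M L Y r.
Proof.
move=> hj hg hd; rewrite /live_codes mem_cat; apply/orP; right.
rewrite mem_cat; apply/orP; left.
apply/flattenP; exists (flatten [seq [seq (1%N, j, g, d) | d <- iota 0 M] | g <- iota 0 (r 0%N)]).
  by apply: (map_f (fun j => flatten [seq [seq (1%N, j, g, d) | d <- iota 0 M] | g <- iota 0 (r 0%N)])); rewrite mem_iota.
apply/flattenP; exists [seq (1%N, j, g, d) | d <- iota 0 M].
  by apply: (map_f (fun g => [seq (1%N, j, g, d) | d <- iota 0 M])); rewrite mem_iota.
by apply: map_f; rewrite mem_iota.
Qed.

Lemma deep_zero s p (f : 'rV[R]_p -> 'rV[R]_s -> R) M r (P : Defs.code -> R)
  (X : seq 'rV[R]_s) L :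
  (forall j g, (j < 2 ^ L)%N -> (g < r 0%N)%N ->
    \sum_(d < M) P (1%N, j, g, val d) * f (theta_of p P d) (nth 0 X j) < 0) ->
  forall l, (l < L)%N -> forall j g, (j < 2 ^ (L - l))%N -> (g < r l)%N ->
    deep_u f M r P X l j g = 0.
Proof.
move=> H; elim => [|l IH] hl j g hj hg /=.
  rewrite subn0 in hj; rewrite /relu maxEle leNgt H //.
have E : (L - l = (L - l.+1).+1)%N by lia.
rewrite big1 /relu ?maxxx // => a _.
have hl' : (l < L)%N by lia.
rewrite !IH ?maxxx ?mulr0 //.
  rewrite E expnS -!muln2; set m := (2 ^ (L - l.+1))%N in hj *; lia.
rewrite E expnS -!muln2; set m := (2 ^ (L - l.+1))%N in hj *; lia.
Qed.


Lemma deep_h_zero s p (f : 'rV[R]_p -> 'rV[R]_s -> R) M r (P : Defs.code -> R)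
  (X : seq 'rV[R]_s) L y : (1 <= L)%N ->
  (forall j g, (j < 2 ^ L)%N -> (g < r 0%N)%N ->
    \sum_(d < M) P (1%N, j, g, val d) * f (theta_of p P d) (nth 0 X j) < 0) ->
  deep_h f M L r P y X = 0.
Proof.
move=> HL H; rewrite /deep_h big1 // => a _.
have E : (L - L.-1 = 1)%N by lia.
rewrite !(deep_zero s p f M r P X L H) ?maxxx ?mulr0 ?E //; lia.
Qed.
End S.
Theorem claim10 (R : realType) (s p : nat)
  (Theta : set 'rV[R]_p) (f : 'rV[R]_p -> 'rV[R]_s -> R)
  (HTheta : open Theta)
  (Hcont : forall (th : 'rV[R]_p) (x : 'rV[R]_s), Theta th ->
     {for (th, x), continuous (fun q : 'rV[R]_p * 'rV[R]_s => f q.1 q.2)})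
  (Hnondeg : forall (m : nat) (z : 'I_m -> 'rV[R]_s), injective z ->
     exists th : 'I_m -> 'rV[R]_p, (forall d, Theta (th d)) /\
       \det (\matrix_(i < m, d < m) f (th d) (z i)) != 0)
  (L : nat) (HL : (1 <= L)%N)
  (r : nat -> nat) (Hr : forall l, (l < L)%N -> (1 <= r l)%N)
  (Y : nat) (y : 'I_Y)
  (M : nat) (xs : 'I_M -> 'rV[R]_s) (Hxs : injective xs)
  (rho : 'rV[R]_(nparams p M L Y r) -> R)
  (Hrho_ge0 : forall v, 0 <= rho v)
  (Hrho_pos : forall v, param_domain Theta v -> 0 < rho v)
  (Hrho_out : forall v, ~ param_domain Theta v -> rho v = 0)
  (Hrho_cont : forall v, param_domain Theta v -> {for v, continuous rho})
  (Hrho_1 : prob_dens rho setT = 1%E) :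
  (0 < prob_dens rho (realizable_event Theta f y xs))%E.
Proof.
have [th [thT hdet]] := Hnondeg M xs Hxs.
set F := \matrix_(i < M, d < M) f (th d) (xs i) in hdet.
have Fu : F \in unitmx by rewrite unitmxE unitfE.
set bs := invmx F *m const_mx (-1) : 'cV[R]_M.
have Fb : F *m bs = const_mx (-1) by rewrite mulKVmx.
pose des (c : Defs.code) : R := let: (t, d, k, a) := c in
  if t == 0%N then
    (match insub d, insub k with Some d', Some k' => th d' ord0 k' | _, _ => 0 end)
  else if t == 1%N then
    (match insub a with Some a' => bs a' ord0 | None => 0 end)
  else 0.
set cs := live_codes p M L Y r.
pose v0 : 'rV[R]_(nparams p M L Y r) :=
  \row_(i < size cs) (des (nth (0%N, 0%N, 0%N, 0%N) cs i) /
            (count_mem (nth (0%N, 0%N, 0%N, 0%N) cs i) cs)%:R).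
have theta0 : forall d : 'I_M, theta_of p (param v0) d = th d.
  move=> dd; apply/rowP => k; rewrite mxE (param_v0 R cs des); last first.
    by rewrite mem0 ?ltn_ord.
  by rewrite /des /= !valK (ord1 ord0).
pose pre (v : 'rV[R]_(nparams p M L Y r)) (j g : nat) (e : 'I_M) :=
  \sum_(d < M) param v (1%N, j, g, val d) * f (theta_of p (param v) d) (xs e).
have pre0 : forall j g e, (j < 2 ^ L)%N -> (g < r 0%N)%N -> pre v0 j g e = -1.
  move=> j g e hj hg.
  have := congr1 (fun A : 'cV[R]_M => A e ord0) Fb; rewrite !mxE => <-.
  rewrite /pre; apply: eq_bigr => dd _; rewrite [F e dd]mxE (param_v0 R cs des); last first.
    by rewrite mem1 ?ltn_ord.
  have hv : insub (nat_of_ord dd) = Some dd := valK dd.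
  by rewrite /des /= hv theta0 mulrC.
have dom0 : param_domain Theta v0 by move=> dd; rewrite theta0.
have param_cvg : forall c, (fun v : 'rV[R]_(nparams p M L Y r) => param v c) @ v0 --> param v0 c.
  by move=> c; exact: lin_cvg.
have theta_cvg : forall dd : nat,
    (fun v : 'rV[R]_(nparams p M L Y r) => theta_of p (param v) dd) @ v0 --> theta_of p (param v0) dd.
  move=> dd; apply: (@row_cvg R _ (nbhs v0) _ p) => k; rewrite mxE.
  under eq_cvg do rewrite mxE.
  exact: param_cvg.
have fval_cvg : forall (dd : 'I_M) (x : 'rV[R]_s),
    (fun v : 'rV[R]_(nparams p M L Y r) => f (theta_of p (param v) dd) x) @ v0 -->
    f (theta_of p (param v0) dd) x.
  move=> dd x.
  apply: (@cvg_comp _ _ _ (fun v => (theta_of p (param v) dd, x)) (fun q => f q.1 q.2) _ (nbhs (theta_of p (param v0) dd, x))).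
    exact: (@cvg_pair _ _ _ (nbhs v0) (nbhs (theta_of p (param v0) dd)) (nbhs x) _ _ _ (fun v => theta_of p (param v) dd) (fun _ => x) (theta_cvg dd) (cvg_cst x)).
  have thv : Theta (theta_of p (param v0) dd) by rewrite theta0.
  exact: (Hcont _ _ thv).
have pre_cvg : forall j g e, pre ^~ j ^~ g ^~ e @ v0 --> pre v0 j g e.
  move=> j g e.
  apply: (@cvg_big R 'I_M +%R 0 xpredT add_continuous _ (nbhs v0) _) => dd _.
  by apply: cvgM; [exact: param_cvg | exact: fval_cvg].
have rho0 := Hrho_pos v0 dom0.
have Hnear : \forall v \near v0, rho v0 / 2 < rho v /\
    (forall dd : 'I_M, Theta (theta_of p (param v) dd)) /\
    (forall (j : 'I_(2 ^ L)) (g : 'I_(r 0%N)) (e : 'I_M), pre v j g e < 0).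
  near=> v; split; [|split].
  - near: v; apply: (cvgr_gt _ (Hrho_cont v0 dom0)); lra.
  - near: v; apply: filter_forall => dd.
    apply: (theta_cvg dd); apply: open_nbhs_nbhs; split => //.
  - near: v; apply: filter_forall => j; apply: filter_forall => g; apply: filter_forall => e.
    apply: (cvgr_lt _ (pre_cvg j g e)); rewrite pre0 ?ltn_ord //; lra.
move/nbhs_ballP: Hnear => [del del0 Hdel].
have good : forall v, ball v0 del v -> rho v0 / 2 <= rho v /\
    realizable_event Theta f y xs v.
  move=> v /Hdel [/ltW hr [hT hpre]]; split => //.
  exists (fun dd => theta_of p (param v) dd); split => //.
  exists (fun _ _ => 0), 0 => ds.
  rewrite /shallow1_h mul0r; apply/esym/deep_h_zero => // j g hj hg.
  have -> : nth 0 (grid_input xs ds) j = xs (tnth ds (Ordinal hj)).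
    rewrite /grid_input (nth_map (tnth ds (Ordinal hj))) ?size_tuple //; congr xs; exact: (esym (tnth_nth _ _ (Ordinal hj))).
  exact: (hpre (Ordinal hj) (Ordinal hg) (tnth ds (Ordinal hj))).
pose w0 (i : nat) : R := match insub i with Some i' => v0 ord0 i' | None => 0 end.
rewrite /prob_dens.
apply: (@lt_le_trans _ _ ((rho v0 / 2) * del ^+ (nparams p M L Y r))%:E).
  by rewrite lte_fin mulr_gt0 ?exprn_gt0 //; lra.
apply: (itint_lb R _ _ w0) => //; first lra.
  move=> w; rewrite lee_fin mulr_ge0 // indicE; by case: (_ \in _).
move=> w wb.
have [hr hev] : rho v0 / 2 <= rho (rowof (nparams p M L Y r) w) /\
   realizable_event Theta f y xs (rowof (nparams p M L Y r) w).
  apply: good; split => // i j; rewrite (ord1 i) mxE.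
  have := wb j (ltn_ord j); rewrite /w0 (valK j : insub (nat_of_ord j) = Some j).
  rewrite -ball_normE /= => H; rewrite mxE distrC; by rewrite /v0 mxE in H.
by rewrite lee_fin indicE mem_set // mulr1.
Unshelve. all: by end_near.
Qed.
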